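(* Let $0\le\beta_1<\beta_2\le\pi$ and let $p=P_2(\beta_1,\beta_2)$, where $P_2(\beta_1,\beta_2)=(0,1)$ if $\beta_1<\frac{\pi}{2}<\beta_2$; $P_2(\beta_1,\beta_2)=P_1(\beta_1,\beta_2)$ if $\beta_2\le\frac{\pi}{2}$; and $P_2(\beta_1,\beta_2)=(-x,y)$ where $(x,y)=P_1(\pi-\beta_2,\pi-\beta_1)$ if $\beta_1\ge\frac{\pi}{2}$. Then the segment $e$ from $(0,0)$ to $p$ satisfies $\beta_1<slope(e)<\beta_2$.
   Context: Slope of the segment from $(0,0)$ to $p\ne(0,0)$: the angle (mod $2\pi$) of the counter-clockwise rotation taking the positive $x$-axis onto the half-line from the origin through $p$. Point rule $P_1(\theta_1,\theta_2)$ for $0\le\theta_1<\theta_2\le\frac{\pi}{2}$, with $d=\lceil\frac{1}{\theta_2-\theta_1}\rceil$: (i) if $\theta_2-\theta_1>\frac{\pi}{4}$: $(1,1)$; (ii) if $\arctan(\frac12)<\theta_2-\theta_1\le\frac{\pi}{4}$: $(1,2)$ if $\theta_1\ge\frac{\pi}{4}$, $(1,1)$ if $\arctan(\frac12)\le\theta_1<\frac{\pi}{4}$, $(2,1)$ if $\theta_1<\arctan(\frac12)$; (iii) if $\theta_2-\theta_1\le\arctan(\frac12)$: $(d,\lfloor\tan(\theta_1)d+1\rfloor)$ if $\theta_2\le\frac{\pi}{4}$, $(1,1)$ if $\theta_1<\frac{\pi}{4}<\theta_2$, $(\lfloor\tan(\frac{\pi}{2}-\theta_2)d+1\rfloor,d)$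 if $\theta_1\ge\frac{\pi}{4}$. *)

(* Defs.v *)
From Stdlib Require Import Reals ZArith.
Open Scope R_scope.

(* floor and ceiling as integers: up x is the unique integer with x < up x <= x+1 *)
Definition Zfloor (x : R) : Z := (up x - 1)%Z.
Definition Zceil (x : R) : Z := (- Zfloor (- x))%Z.

Definition pt := (Z * Z)%type.

(* slope of the segment from (0,0) to p <> (0,0): the angle theta in [0, 2*PI)
   of the counter-clockwise rotation taking the positive x-axis onto the
   half-line from the origin through p, i.e. p = |p| (cos theta, sin theta). *)
Definition is_slope (p : pt) (theta : R) : Prop :=
  0 <= theta < 2 * PI /\
  let x := IZR (fst p) in let y := IZR (snd p) in
  x = sqrt (x ^ 2 + y ^ 2) * cos theta /\ y = sqrt (x ^ 2 + y ^ 2) * sin theta.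

(* Point rule P_1 (for 0 <= t1 < t2 <= PI/2). *)
Definition P1 (t1 t2 : R) : pt :=
  let d := Zceil (1 / (t2 - t1)) in
  if Rlt_dec (PI / 4) (t2 - t1) then (1%Z, 1%Z)
  else if Rlt_dec (atan (1/2)) (t2 - t1) then
    (if Rle_dec (PI / 4) t1 then (1%Z, 2%Z)
     else if Rle_dec (atan (1/2)) t1 then (1%Z, 1%Z)
     else (2%Z, 1%Z))
  else
    (if Rle_dec t2 (PI / 4) then (d, Zfloor (tan t1 * IZR d + 1))
     else if Rlt_dec t1 (PI / 4) then (1%Z, 1%Z)
     else (Zfloor (tan (PI / 2 - t2) * IZR d + 1), d)).

(* Point rule P_2 (for 0 <= b1 < b2 <= PI). *)
Definition P2 (b1 b2 : R) : pt :=
  if Rle_dec b2 (PI / 2) then P1 b1 b2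
  else if Rlt_dec b1 (PI / 2) then (0%Z, 1%Z)
  else let q := P1 (PI - b2) (PI - b1) in ((- fst q)%Z, snd q).

(* Main.v *)
Require Import Defs.
From Stdlib Require Import Reals ZArith Lra Lia.
Open Scope R_scope.

Lemma zfloor_spec x : IZR (Defs.Zfloor x) <= x < IZR (Defs.Zfloor x) + 1.
Proof.
  unfold Defs.Zfloor. rewrite minus_IZR. destruct (archimed x). simpl. lra.
Qed.

Lemma zceil_spec x : x <= IZR (Defs.Zceil x) < x + 1.
Proof.
  unfold Defs.Zceil. rewrite opp_IZR. destruct (zfloor_spec (- x)). lra.
Qed.

Lemma atan_diff a b : 0 <= a -> a < b -> atan b - atan a < b - a.
Proof.
  intros Ha Hab.
  destruct (MVT_cor2 atan (fun x => / (1 + x ^ 2)) a b Hab) as [c [Hc Hc2]].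
  { intros c _. apply derivable_pt_lim_atan. }
  rewrite Hc.
  assert (H1 : 1 < 1 + c ^ 2) by nra.
  assert (H2 : / (1 + c ^ 2) < 1).
  { rewrite <- Rinv_1. apply Rinv_lt_contravar; lra. }
  nra.
Qed.

Lemma slope_q (x y : Z) : (0 < x)%Z -> (0 < y)%Z ->
  is_slope (x, y) (atan (IZR y / IZR x)).
Proof.
  intros Hx Hy. apply IZR_lt in Hx. apply IZR_lt in Hy.
  unfold is_slope; simpl fst; simpl snd; cbv zeta.
  set (X := IZR x) in *. set (Y := IZR y) in *.
  set (u := Y / X).
  assert (Hs : sqrt (X ^ 2 + Y ^ 2) = X * sqrt (1 + u²)).
  { replace (X ^ 2 + Y ^ 2) with (X² * (1 + u²)).
    - rewrite sqrt_mult. rewrite sqrt_Rsqr; lra. apply Rle_0_sqr.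
      pose proof (Rle_0_sqr u); lra.
    - unfold u, Rsqr. field. lra. }
  assert (Hp : 0 < sqrt (1 + u²)).
  { apply sqrt_lt_R0. pose proof (Rle_0_sqr u); lra. }
  pose proof (atan_bound u).
  assert (0 < atan u). { rewrite <- atan_0. apply atan_increasing.
    unfold u. apply Rdiv_lt_0_compat; lra. }
  split. { pose proof PI_RGT_0. lra. }
  rewrite Hs, cos_atan, sin_atan. split.
  - field. lra.
  - unfold u in *. field. split; lra.
Qed.

Lemma core t1 t2 : 0 <= t1 -> t1 < t2 -> t1 < PI / 2 ->
  (0 < Defs.Zceil (1 / (t2 - t1)))%Z /\
  (0 < Defs.Zfloor (tan t1 * IZR (Defs.Zceil (1 / (t2 - t1))) + 1))%Z /\
  t1 < atan (IZR (Defs.Zfloor (tan t1 * IZR (Defs.Zceil (1 / (t2 - t1))) + 1))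
             / IZR (Defs.Zceil (1 / (t2 - t1)))) < t2.
Proof.
  intros H0 H12 Hpi.
  set (d := Defs.Zceil (1 / (t2 - t1))).
  set (y := Defs.Zfloor (tan t1 * IZR d + 1)).
  pose proof (zceil_spec (1 / (t2 - t1))) as Hd. fold d in Hd.
  pose proof (zfloor_spec (tan t1 * IZR d + 1)) as Hy. fold y in Hy.
  assert (HD0 : 0 < 1 / (t2 - t1)) by (apply Rdiv_lt_0_compat; lra).
  assert (HD : 0 < IZR d) by lra.
  assert (Ht : 0 <= tan t1).
  { destruct H0 as [H0|H0]. left; apply tan_gt_0; lra. subst; rewrite tan_0; lra. }
  assert (HY : tan t1 * IZR d < IZR y) by lra.
  assert (HY0 : 0 < IZR y) by nra.
  split. { apply lt_IZR. exact HD. }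
  split. { apply lt_IZR. exact HY0. }
  assert (Hlow : tan t1 < IZR y / IZR d).
  { apply (Rmult_lt_reg_r (IZR d)); auto. unfold Rdiv.
    rewrite Rmult_assoc, Rinv_l; lra. }
  assert (Hup : IZR y / IZR d <= tan t1 + (t2 - t1)).
  { assert (Hinv : / IZR d <= t2 - t1).
    { replace (t2 - t1) with (/ (1 / (t2 - t1))) by (field; lra).
      apply Rinv_le_contravar; lra. }
    assert (IZR y / IZR d <= tan t1 + / IZR d).
    { apply (Rmult_le_reg_r (IZR d)); auto.
      replace (IZR y / IZR d * IZR d) with (IZR y) by (field; lra).
      replace ((tan t1 + / IZR d) * IZR d) with (tan t1 * IZR d + 1) by (field; lra).
      lra. }
    lra. }
  pose proof (atan_diff _ _ Ht Hlow) as Ha.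
  rewrite atan_tan in Ha by lra.
  split.
  - rewrite <- (atan_tan t1) at 1 by lra. apply atan_increasing. exact Hlow.
  - lra.
Qed.

Lemma half_facts : 0 < atan (1/2) < PI / 4 /\ PI / 4 < 2 * atan (1/2) /\
  atan 2 = PI / 2 - atan (1/2).
Proof.
  replace (1/2) with (/2) by field.
  assert (A0 : 0 < atan (/2)) by (rewrite <- atan_0; apply atan_increasing; lra).
  assert (A1 : atan (/2) < PI/4) by (rewrite <- atan_1; apply atan_increasing; lra).
  assert (A3 : atan (/3) < atan (/2)) by (apply atan_increasing; lra).
  pose proof Machin_2_3.
  split; [lra|split; [lra|]].
  rewrite <- atan_inv by lra. rewrite Rinv_inv. reflexivity.
Qed.

Lemma P1_spec t1 t2 : 0 <= t1 -> t1 < t2 -> t2 <= PI / 2 ->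
  (0 < fst (P1 t1 t2))%Z /\ (0 < snd (P1 t1 t2))%Z /\
  t1 < atan (IZR (snd (P1 t1 t2)) / IZR (fst (P1 t1 t2))) < t2.
Proof.
  intros H0 H12 H2.
  destruct half_facts as [[Ha0 Ha1] [Ha2 Ha3]].
  pose proof PI_RGT_0.
  assert (E11 : atan (IZR 1 / IZR 1) = PI / 4)
    by (replace (IZR 1 / IZR 1) with 1 by (simpl; field); apply atan_1).
  unfold P1.
  destruct (Rlt_dec (PI / 4) (t2 - t1)).
  { simpl fst; simpl snd. rewrite E11. repeat split; try lia; lra. }
  destruct (Rlt_dec (atan (1/2)) (t2 - t1)).
  { destruct (Rle_dec (PI / 4) t1).
    { simpl fst; simpl snd. replace (IZR 2 / IZR 1) with 2 by (simpl; field).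
      rewrite Ha3. repeat split; try lia; lra. }
    destruct (Rle_dec (atan (1/2)) t1).
    { simpl fst; simpl snd. rewrite E11. repeat split; try lia; lra. }
    simpl fst; simpl snd. replace (IZR 1 / IZR 2) with (1/2) by (simpl; field).
    repeat split; try lia; lra. }
  destruct (Rle_dec t2 (PI / 4)).
  { simpl fst; simpl snd. apply core; lra. }
  destruct (Rlt_dec t1 (PI / 4)).
  { simpl fst; simpl snd. rewrite E11. repeat split; try lia; lra. }
  simpl fst; simpl snd.
  pose proof (core (PI/2 - t2) (PI/2 - t1)) as C.
  replace (PI / 2 - t1 - (PI / 2 - t2)) with (t2 - t1) in C by ring.
  destruct C as [Cd [Cx [Cl Cu]]]; try lra.
  set (d := Defs.Zceil (1 / (t2 - t1))) in *.
  set (x := Defs.Zfloor (tan (PI / 2 - t2) * IZR d + 1)) in *.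
  split; [exact Cx|split; [exact Cd|]].
  apply IZR_lt in Cd. apply IZR_lt in Cx.
  replace (IZR d / IZR x) with (/ (IZR x / IZR d)) by (field; lra).
  rewrite atan_inv by (apply Rdiv_lt_0_compat; lra).
  lra.
Qed.

Theorem lemma9 (b1 b2 : R) (h0 : 0 <= b1) (h12 : b1 < b2) (h2 : b2 <= PI) :
  P2 b1 b2 <> (0%Z, 0%Z) /\
  exists theta, is_slope (P2 b1 b2) theta /\ b1 < theta < b2.
Proof.
  pose proof PI_RGT_0.
  unfold P2.
  destruct (Rle_dec b2 (PI / 2)).
  { destruct (P1_spec b1 b2) as [Hx [Hy Ht]]; try lra.
    destruct (P1 b1 b2) as [x y]. simpl in Hx, Hy, Ht.
    split. { intro E; inversion E; lia. }
    exists (atan (IZR y / IZR x)). split; [apply slope_q; auto | lra]. }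
  destruct (Rlt_dec b1 (PI / 2)).
  { split. { intro E; inversion E. }
    exists (PI / 2). split; [|lra].
    unfold is_slope; simpl fst; simpl snd; cbv zeta. rewrite cos_PI2, sin_PI2.
    replace (IZR 0 ^ 2 + IZR 1 ^ 2) with 1 by (simpl; ring). rewrite sqrt_1.
    split; [lra|]. split; simpl; ring. }
  destruct (P1_spec (PI - b2) (PI - b1)) as [Hx [Hy Ht]]; try lra.
  destruct (P1 (PI - b2) (PI - b1)) as [x y]. simpl in Hx, Hy, Ht |- *.
  split. { intro E; inversion E; lia. }
  exists (PI - atan (IZR y / IZR x)). split; [|lra].
  pose proof (slope_q x y Hx Hy) as S.
  unfold is_slope in *; simpl in *.
  destruct S as [S0 [S1 S2]].
  rewrite opp_IZR. split; [lra|].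
  rewrite Rtrigo_facts.cos_pi_minus, sin_PI_x.
  replace (- IZR x * (- IZR x * 1)) with (IZR x * (IZR x * 1)) by ring.
  split; lra.
Qed.
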